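(* Let $(T,X)$ be a flow ($T$ a Hausdorff topological group, $X$ a Hausdorff uniform space) and let $S$ be a thick normal subsemigroup of $T$. Let $x\in X$ be such that $\overline{S^{-1}x}$ is compact and the subflow $(T,Tx)$ is uniformly Lyapunov $S$-stable. Then $\overline{Tx}$ is compact, $(T,\overline{Tx})$ is minimal, and $(T,\overline{Tx})$ is an a.p. flow.
   Context: $\mathscr U_X$ is a compatible symmetric uniformity of $X$. $S\subseteq T$ is (right) thick if for every compact $K\subseteq T$ there is $t$ with $Kt\subseteq S$; normal means $St=tS$ for all $t\in T$; $S^{-1}=\{s^{-1}:s\in S\}$. $(T,Tx)$ is uniformly Lyapunov $S$-stable if for every $\varepsilon\in\mathscr U_X$ there is $\delta\in\mathscr U_X$ such that $(sy,sz)\in\varepsilon$ for all $s\in S$ and all $y,z\in Tx$ with $(y,z)\in\delta$. $A\subseteq T$ is syndetic if there is compact $K$ with $Kt\cap A\neq\emptyset$ for all $t$. A flow $(T,Z)$ is an a.p. flow if for every $\alpha$ in its uniformity there is a syndetic $A\subseteq T$ with $Az\subseteq\alpha[z]$ for all $z\in Z$. *)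

(* Defs.v *)
From HB Require Import structures.
From mathcomp Require Import all_boot all_order.
From mathcomp Require Import all_classical all_reals topology.
Set Implicit Arguments. Unset Strict Implicit. Unset Printing Implicit Defensive.
Local Open Scope classical_set_scope.

Record topGroup (T : topologicalType) := TopGroup {
  gmul : T -> T -> T;
  gone : T;
  ginv : T -> T;
  gmulA : forall a b c, gmul a (gmul b c) = gmul (gmul a b) c;
  gmul1l : forall a, gmul gone a = a;
  gmul1r : forall a, gmul a gone = a;
  gmulVl : forall a, gmul (ginv a) a = gone;
  gmulVr : forall a, gmul a (ginv a) = gone;
  gmul_cont : continuous (fun p : T * T => gmul p.1 p.2);
  ginv_cont : continuous ginv
}.

Definition is_flow (T : topologicalType) (G : topGroup T) (X : topologicalType)
  (act : T -> X -> X) : Prop :=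
  [/\ forall x, act (gone G) x = x,
      forall s t x, act (gmul G s t) x = act s (act t x)
    & continuous (fun p : T * X => act p.1 p.2)].

Section Defs.
Variables (T : topologicalType) (G : topGroup T).
Local Notation "a * b" := (gmul G a b).

Definition subsemigroup (S : set T) := forall a b, S a -> S b -> S (a * b).

Definition thick (S : set T) :=
  forall K : set T, compact K -> exists t, forall k, K k -> S (k * t).

Definition normal_sub (S : set T) :=
  forall t, [set s * t | s in S] = [set t * s | s in S].

Definition syndetic (A : set T) :=
  exists K : set T, compact K /\ forall t, exists2 k, K k & A (k * t).

Definition inv_set (S : set T) : set T := [set ginv G s | s in S].

Variables (X : uniformType) (act : T -> X -> X).

Definition torbit (x : X) : set X := [set act t x | t in [set: T]].

Definition invariant (Z : set X) := forall t z, Z z -> Z (act t z).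

Definition unif_lyapunov_stable (S : set T) (x : X) :=
  forall eps, entourage eps -> exists2 delta, entourage delta &
    forall s y z, S s -> torbit x y -> torbit x z -> delta (y, z) ->
      eps (act s y, act s z).

Definition minimal_flow (Z : set X) :=
  Z !=set0 /\
  forall A, A `<=` Z -> A !=set0 -> closed A -> invariant A -> A = Z.

(* (T, Z) is an a.p. flow; the uniformity of Z is the trace of that of X. *)
Definition ap_flow (Z : set X) :=
  forall alpha, entourage alpha -> exists2 A, syndetic A &
    forall a z, A a -> Z z -> alpha (z, act a z).

End Defs.

(* Main.v *)
Require Import Defs.
From HB Require Import structures.
From mathcomp Require Import all_boot all_order.
From mathcomp Require Import all_classical all_reals topology.
Local Open Scope classical_set_scope.
Section Grp.
Variables (T : topologicalType) (G : topGroup T).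
Local Notation "a * b" := (gmul G a b).
Local Notation "a ^-1" := (ginv G a).
Local Notation e := (gone G).

Lemma mulKg a b : a^-1 * (a * b) = b.
Proof. by rewrite gmulA gmulVl gmul1l. Qed.
Lemma mulKVg a b : a * (a^-1 * b) = b.
Proof. by rewrite gmulA gmulVr gmul1l. Qed.
Lemma mulgK a b : (b * a) * a^-1 = b.
Proof. by rewrite -gmulA gmulVr gmul1r. Qed.
Lemma mulgKV a b : (b * a^-1) * a = b.
Proof. by rewrite -gmulA gmulVl gmul1r. Qed.
Lemma inv_uniq a b : a * b = e -> a^-1 = b.
Proof. by move=> h; rewrite -[b](mulKg a) h gmul1r. Qed.
Lemma ginvK a : (a^-1)^-1 = a.
Proof. by apply: inv_uniq; rewrite gmulVl. Qed.
Lemma ginvM a b : (a * b)^-1 = b^-1 * a^-1.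
Proof. by apply: inv_uniq; rewrite gmulA mulgK gmulVr. Qed.
Lemma ginv1 : e^-1 = e.
Proof. by apply: inv_uniq; rewrite gmul1l. Qed.
End Grp.
Arguments mulKg {T G}. Arguments mulKVg {T G}. Arguments mulgK {T G}.
Arguments mulgKV {T G}. Arguments inv_uniq {T G}. Arguments ginvK {T G}.
Arguments ginvM {T G}. Arguments ginv1 {T G}.
Section Ent.
Variable X : uniformType.

Lemma nbhs_ent (z : X) B : nbhs z B -> exists2 E, entourage E & forall w, E (z, w) -> B w.
Proof.
move/nbhsP => [E entE sub]; exists E => // w h; apply: sub; by rewrite /xsection /= inE.
Qed.

Lemma ent_nbhs (z : X) E : entourage E -> nbhs z [set w | E (z, w)].
Proof.
move=> entE; apply: filterS (nbhs_entourage z entE) => w; by rewrite /xsection /= inE.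
Qed.

Lemma closure_ent (A : set X) z :
  closure A z <-> forall E, entourage E -> exists w, A w /\ E (z, w).
Proof.
split=> [cl E entE|h B /nbhs_ent [E entE sub]].
  by have [w [Aw Ew]] := cl _ (ent_nbhs z _ entE); exists w.
by have [w [Aw Ew]] := h E entE; exists w; split => //; exact: sub.
Qed.

Lemma ent_sym3 (eps : set (X * X)) : entourage eps ->
  exists2 E, entourage E & (forall a b, E (a, b) -> E (b, a)) /\
    forall a b c d, E (a, b) -> E (b, c) -> E (c, d) -> eps (a, d).
Proof.
move=> he; set E1 := split_ent eps; set E2 := split_ent E1.
have e1 : entourage E1 by exact: entourage_split_ent.
have e2 : entourage E2 by exact: entourage_split_ent.
exists (E2 `&` E2^-1)%relation; first exact: entourage_invI.
split; first by move=> a b [h1 h2]; split.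
move=> a b c d [h1 _] [h2 _] [h3 _].
apply: (subset_split_ent he); exists c => /=.
  apply: (subset_split_ent e1); by exists b.
exact: (split_ent_subset e1).
Qed.

Lemma ent_sym2 (eps : set (X * X)) : entourage eps ->
  exists2 E, entourage E & (forall a b, E (a, b) -> E (b, a)) /\
    forall a b c, E (a, b) -> E (b, c) -> eps (a, c).
Proof.
move=> /ent_sym3 [E eE [sy h]]; exists E => //; split => // a b c h1 h2.
by apply: (h a b c c) => //; exact: entourage_refl.
Qed.

Lemma ent_sym1 (eps : set (X * X)) : entourage eps ->
  exists2 E, entourage E & (forall a b, E (a, b) -> E (b, a)) /\
    forall a b, E (a, b) -> eps (a, b).
Proof.
move=> /ent_sym2 [E eE [sy h]]; exists E => //; split => // a b h1.
by apply: (h a b b) => //; exact: entourage_refl.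
Qed.
End Ent.
Arguments nbhs_ent {X}. Arguments ent_nbhs {X}. Arguments closure_ent {X}.
Arguments ent_sym3 {X eps}. Arguments ent_sym2 {X eps}. Arguments ent_sym1 {X eps}.
Section Flow.
Variables (T : topologicalType) (G : topGroup T) (X : uniformType)
  (act : T -> X -> X).
Hypothesis hflow : is_flow G act.
Local Notation "a * b" := (gmul G a b).
Local Notation "a ^-1" := (ginv G a).
Local Notation e := (gone G).

Lemma act1 z : act e z = z. Proof. by case: hflow. Qed.
Lemma actM s t z : act (s * t) z = act s (act t z). Proof. by case: hflow. Qed.
Lemma act_cont s : continuous (act s).
Proof.
move=> z; case: hflow => _ _ hc.
have := @continuous_comp _ _ _ (fun z : X => (s, z)) (fun p : T * X => act p.1 p.2) z.
apply; last exact: hc.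
by apply: cvg_pair; [exact: cvg_cst | exact: cvg_id].
Qed.
End Flow.
Arguments act1 {T G X act} hflow z.
Arguments actM {T G X act} hflow s t z.
Arguments act_cont {T G X act} hflow s.
Section Main.
Variables (T : topologicalType) (G : topGroup T) (X : uniformType)
  (act : T -> X -> X) (S : set T) (x : X).
Hypotheses (hflow : is_flow G act) (hsg : subsemigroup G S)
  (hthick : thick G S) (hnorm : normal_sub G S)
  (hC : compact (closure [set act s x | s in inv_set G S]))
  (hstab : unif_lyapunov_stable act S x).
Local Notation "a * b" := (gmul G a b).
Local Notation "a ^-1" := (ginv G a).
Local Notation e := (gone G).
Local Notation C := (closure [set act s x | s in inv_set G S]).
Local Notation Y := (closure (torbit act x)).

Lemma conjS t a : S a -> S (t * a * t^-1).
Proof.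
move=> Sa.
have : [set s * t | s in S] (t * a) by rewrite hnorm; exists a.
by case=> s Ss <-; rewrite mulgK.
Qed.

Lemma compact_seq (ks : seq T) : compact [set k | k \in ks].
Proof.
elim: ks => [|a ks ih].
  by rewrite (_ : [set k | k \in [::]] = set0); [exact: compact0|apply/seteqP; split].
rewrite (_ : [set k | k \in a :: ks] = [set a] `|` [set k | k \in ks]).
  have h1 : compact [set a] by exact: compact_set1.
  exact: compactU h1 ih.
apply/seteqP; split => k /=; rewrite inE.
  by case/orP => [/eqP ->|h]; [left|right].
by case => [->|->]; rewrite ?eqxx ?orbT.
Qed.

Lemma thickR (ks : seq T) : exists u, forall k, k \in ks -> S (k * u).
Proof. exact: hthick (compact_seq ks). Qed.

Lemma thickL (ks : seq T) : exists u, forall k, k \in ks -> S (u * k).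
Proof.
have [u hu] := thickR ks; exists u => k /hu /(conjS k^-1).
by rewrite mulKg ginvK.
Qed.

Lemma tor_Y t : Y (act t x).
Proof. by apply: subset_closure; exists t. Qed.

Lemma x_Y : Y x.
Proof. by rewrite -{2}(act1 hflow x); exact: tor_Y. Qed.

Lemma Y_inv t z : Y z -> Y (act t z).
Proof.
move=> Yz B nB.
have := act_cont hflow t z B nB => /Yz [w [[r _ <-] Bw]].
by exists (act (t * r) x); split; [exists (t * r)|rewrite (actM hflow)].
Qed.

Lemma tor_C : torbit act x `<=` C -> Y `<=` C.
Proof.
move=> h; rewrite [X in _ `<=` X](_ : _ = closure C).
  exact: closureS.
by apply/closure_id; exact: closed_closure.
Qed.

Definition Kl t (l : seq T) := [:: e; t] ++ map (fun c => c^-1 * t^-1) l.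
Definition chooseu t l := projT1 (cid (thickL (Kl t l))).
Lemma chooseuP t l k : k \in Kl t l -> S (chooseu t l * k).
Proof. exact: (projT2 (cid (thickL (Kl t l)))). Qed.
Fixpoint cs t n := match n with 0 => [::] | n'.+1 => chooseu t (cs t n') :: cs t n' end.
Definition cc t n := chooseu t (cs t n).

Lemma cs_mem t i j : (i < j)%N -> cc t i \in cs t j.
Proof.
elim: j => [//|j ih]; rewrite ltnS leq_eqVlt => /orP [/eqP ->|/ih h] /=.
  by rewrite inE eqxx.
by rewrite inE h orbT.
Qed.

Lemma cc_S t n : S (cc t n).
Proof. by rewrite -[cc t n](gmul1r G); apply: chooseuP; rewrite mem_cat inE eqxx. Qed.
Lemma cc_St t n : S (cc t n * t).
Proof. by apply: chooseuP; rewrite mem_cat !inE eqxx orbT. Qed.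
Lemma cc_Sij t i j : (i < j)%N -> S (cc t j * ((cc t i)^-1 * t^-1)).
Proof.
move=> ij; apply: chooseuP; rewrite mem_cat; apply/orP; right.
by apply: (map_f (fun c => c^-1 * t^-1)); exact: cs_mem.
Qed.

Lemma Key t delta : entourage delta -> exists a b,
  [/\ S a, S b, S (b * t), S (a * (b^-1 * t^-1)) &
      delta (act a^-1 x, act b^-1 x)].
Proof.
move=> ed; have [E eE [Esy Etr]] := ent_sym2 ed.
pose P n := act (cc t n)^-1 x.
have FC : (P @ \oo) C.
  apply: filterS (nbhs_infty_ge 0) => n _; apply: subset_closure; exists (cc t n)^-1 => //.
  by exists (cc t n) => //; exact: cc_S.
have [p [Cp clp]] := hC _ _ FC.
pose A N := [set y | exists2 n, (N <= n)%N & y = P n].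
have FA N : (P @ \oo) (A N).
  by apply: filterS (nbhs_infty_ge N) => n hn; exists n.
have [_ [[n1 _ ->] E1]] := clp _ _ (FA 0%N) (ent_nbhs p _ eE).
have [_ [[n2 h2 ->] E2]] := clp _ _ (FA n1.+1) (ent_nbhs p _ eE).
exists (cc t n2), (cc t n1); split.
- exact: cc_S.
- exact: cc_S.
- exact: cc_St.
- exact: cc_Sij.
- by apply: (Etr _ p) => //; exact: Esy.
Qed.
Lemma tor_in_C : torbit act x `<=` C.
Proof.
move=> _ [t _ <-]; apply/closure_ent => eps ee.
have [delta ed hd] := hstab _ (entourage_inv ee).
have [a [b [Sa Sb Sbt Sab hab]]] := Key t _ ed.
have Stb : S (t * b) by have := conjS t _ Sbt; rewrite gmulA mulgK.
have := hd (t * b) _ _ Stb (ex_intro2 _ _ a^-1 I erefl) (ex_intro2 _ _ b^-1 I erefl) hab.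
rewrite /= -!(actM hflow) mulgK => h.
exists (act ((t * b) * a^-1) x); split => //.
exists ((a * (b^-1 * t^-1))^-1); first by exists (a * (b^-1 * t^-1)).
by rewrite !ginvM !ginvK.
Qed.

Lemma ret t eps : entourage eps -> exists2 s, S s & eps (x, act s (act t x)).
Proof.
move=> ee; have [delta ed hd] := hstab _ ee.
have [a [b [Sa Sb Sbt Sab hab]]] := Key t _ ed.
exists (a * (b^-1 * t^-1)) => //.
have := hd a _ _ Sa (ex_intro2 _ _ a^-1 I erefl) (ex_intro2 _ _ b^-1 I erefl) hab.
by rewrite -!(actM hflow) gmulVr (act1 hflow) -gmulA mulgKV.
Qed.

Lemma equi eps : entourage eps -> exists2 delta, entourage delta &
  forall s y z, S s -> Y y -> Y z -> delta (y, z) -> eps (act s y, act s z).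
Proof.
move=> ee; have [E1 eE1 [sy1 tr1]] := ent_sym3 ee.
have [d0 ed0 hd0] := hstab _ eE1.
have [D eD [syD trD]] := ent_sym3 ed0.
exists D => // s y z Ss Yy Yz Dyz.
have nb w : nbhs w ([set u | D (w, u)] `&` (act s @^-1` [set u | E1 (act s w, u)])).
  apply: filterI; first exact: ent_nbhs.
  exact: act_cont hflow s w _ (ent_nbhs _ _ eE1).
have [_ [[r1 _ <-] [Dy Ey]]] := Yy _ (nb y).
have [_ [[r2 _ <-] [Dz Ez]]] := Yz _ (nb z).
have := hd0 s _ _ Ss (ex_intro2 _ _ r1 I erefl) (ex_intro2 _ _ r2 I erefl)
  (trD _ y z _ (syD _ _ Dy) Dyz Dz).
move=> h; exact: (tr1 _ (act s (act r1 x)) (act s (act r2 x)) _ Ey h (sy1 _ _ Ez)).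
Qed.

Lemma minY : minimal_flow act Y.
Proof.
split; first by exists x; exact: x_Y.
move=> A AY [y Ay] clA invA.
have eA : A = closure A by exact/closure_id.
have xA : A x.
  rewrite eA; apply/closure_ent => eps ee.
  have [E eE [syE trE]] := ent_sym2 ee.
  have [d ed hd] := equi _ eE.
  have [_ [[t _ <-] dyt]] := (closure_ent _ _).1 (AY y Ay) d ed.
  have [s Ss hs] := ret t _ eE.
  exists (act s y); split; first exact: invA.
  apply: (trE _ (act s (act t x))) => //.
  exact: syE (hd s _ _ Ss (AY y Ay) (tor_Y t) dyt).
apply/seteqP; split => //.
rewrite eA; apply: closureS => _ [t _ <-]; exact: invA xA.
Qed.
Lemma Ycomp : compact Y.
Proof.
apply: (@subclosed_compact _ _ C) => //; [exact: closed_closure | exact: tor_C tor_in_C].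
Qed.

Lemma TB E : entourage E -> exists2 ds : seq X, (forall d, d \in ds -> Y d) &
  (forall z, Y z -> exists2 d, d \in ds & E (d, z)).
Proof.
move=> eE; apply: contrapT => hno.
pose D := [set ds : seq X | forall d, d \in ds -> Y d].
pose B (ds : seq X) := [set z | Y z /\ forall d, d \in ds -> ~ E (d, z)].
have FF : Filter (filter_from D B).
  apply: filter_from_filter; first by exists [::].
  move=> i j Di Dj; exists (i ++ j).
    by move=> d; rewrite mem_cat => /orP [/Di|/Dj].
  move=> z [Yz hz]; split; split => // d hd; apply: hz; by rewrite mem_cat hd ?orbT.
have PF : ProperFilter (filter_from D B).
  apply: filter_from_proper => ds Dds.
  apply: contrapT => hne; apply: hno; exists ds => // z Yz.
  apply: contrapT => hz; apply: hne; exists z; split => // d hd Edz; apply: hz.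
  by exists d.
have FY : filter_from D B Y by exists [::] => // z [].
have [p [Yp clp]] := Ycomp _ PF FY.
have Dp : D [:: p] by move=> d; rewrite inE => /eqP ->.
have := clp (B [:: p]) [set w | E (p, w)] (ex_intro2 _ _ [:: p] Dp (fun z h => h)) (ent_nbhs p _ eE).
by case=> w [[_ hw] Ew]; apply: (hw p) => //; rewrite inE eqxx.
Qed.

Lemma net eps : entourage eps -> exists (I : finType) (f : I -> T),
  forall s, S s -> exists i, forall z, Y z -> eps (act s z, act (f i) z).
Proof.
move=> ee; have [E1 eE1 [sy1 tr1]] := ent_sym3 ee.
have [d ed hd] := equi _ eE1.
have [ys Yys cys] := TB _ ed.
have [E2 eE2 [sy2 tr2]] := ent_sym2 eE1.
have [ws _ cws] := TB _ eE2.
pose Pc s (c : {ffun 'I_(size ys) -> 'I_(size ws)}) :=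
  forall k : 'I_(size ys), E2 (nth x ws (c k), act s (nth x ys k)).
have exc s : S s -> exists c, Pc s c.
  move=> Ss.
  have hk (k : 'I_(size ys)) : exists j : 'I_(size ws), E2 (nth x ws j, act s (nth x ys k)).
    have Yk : Y (act s (nth x ys k)) by apply: Y_inv; apply: Yys; exact: mem_nth.
    have [w win Ew] := cws _ Yk.
    have hi : (index w ws < size ws)%N by rewrite index_mem.
    by exists (Ordinal hi); rewrite /= nth_index.
  exists [ffun k => projT1 (cid (hk k))] => k; rewrite ffunE.
  exact: (projT2 (cid (hk k))).
pose rep c := match pselect (exists s, S s /\ Pc s c) with
  | left h => projT1 (cid h) | right _ => e end.
exists {ffun 'I_(size ys) -> 'I_(size ws)}, rep => s Ss.
have [c Pcs] := exc s Ss; exists c => z Yz.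
rewrite /rep; case: pselect => [h|]; last by case; exists s.
case: (projT2 (cid h)); set s' := projT1 (cid h) => Ss' Pcs'.
have [y yin Dyz] := cys _ Yz.
have [k eyk] : exists k : 'I_(size ys), y = nth x ys k.
  have hi : (index y ys < size ys)%N by rewrite index_mem.
  by exists (Ordinal hi); rewrite /= nth_index.
rewrite eyk in Dyz.
have Yk : Y (nth x ys k) by apply: Yys; exact: mem_nth.
apply: (tr1 _ (act s (nth x ys k)) (act s' (nth x ys k))).
- exact: sy1 (hd s _ _ Ss Yk Yz Dyz).
- exact: tr2 (sy2 _ _ (Pcs k)) (Pcs' k).
- exact: hd s' _ _ Ss' Yk Yz Dyz.
Qed.
Definition gpow g n := iter n (fun h => g * h) e.
Lemma gpow_add g m n : gpow g (m + n) = gpow g m * gpow g n.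
Proof.
elim: m => [|m ih]; first by rewrite add0n /= gmul1l.
by rewrite addSn /= ih gmulA.
Qed.
Lemma gpowSr g n : gpow g n.+1 = gpow g n * g.
Proof. by rewrite -addn1 gpow_add /= gmul1r. Qed.
Lemma gpowS_S g n : S g -> S (gpow g n.+1).
Proof.
move=> Sg; elim: n => [|n ih]; first by rewrite /= gmul1r.
by rewrite [gpow _ _]/=; apply: hsg.
Qed.

Lemma IA eps : entourage eps -> forall g, S g ->
  exists r, (r = e \/ S r) /\ forall v, Y v -> eps (act g^-1 v, act r v).
Proof.
move=> ee g Sg; have [E eE [sy tr]] := ent_sym2 ee.
have [I [f hf]] := net _ eE.
pose cell (n : 'I_#|I|.+1) := projT1 (cid (hf (gpow g n.+1) (gpowS_S g n Sg))).
have cellP (n : 'I_#|I|.+1) z : Y z -> E (act (gpow g n.+1) z, act (f (cell n)) z).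
  exact: (projT2 (cid (hf (gpow g n.+1) (gpowS_S g n Sg)))).
have [n1 [n2 [ec lt12]]] : exists n1 n2 : 'I_#|I|.+1, cell n1 = cell n2 /\ (n1 < n2)%N.
  apply: contrapT => hno.
  have inj : injective cell.
    move=> a b eab; case: (ltngtP a b) => [ab|ba|ab].
    - by exfalso; apply: hno; exists a, b.
    - by exfalso; apply: hno; exists b, a; split.
    - exact: val_inj.
  by have := leq_card cell inj; rewrite card_ord ltnn.
pose k := (n2 - n1.+1)%N.
have en2 : (n2.+1 = k.+1 + n1.+1)%N by rewrite /k addSn subnK.
exists (gpow g k); split.
  by rewrite /k; case: (n2 - n1.+1)%N => [|k']; [left|right; exact: gpowS_S].
move=> v Yv.
pose z := act (gpow g n1.+1)^-1 (act g^-1 v).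
have Yz : Y z by apply: Y_inv; exact: Y_inv.
have h1 := cellP n1 z Yz; have h2 := cellP n2 z Yz.
rewrite -ec in h2.
have := tr _ _ _ h1 (sy _ _ h2).
by rewrite /z en2 gpow_add -!(actM hflow) gmulVr gmul1l mulgK gpowSr mulgK.
Qed.
Lemma apY : ap_flow G act Y.
Proof.
move=> alpha ea.
have [E eE [sy tr]] := ent_sym2 ea.
have [d ed hd] := equi _ eE.
have [E3 eE3 [sy3 tr3]] := ent_sym2 ed.
have eE' : entourage (E `&` E3) by exact: filterI.
have [I [f hf]] := net _ eE'.
pose f' (o : option I) := if o is Some i then f i else e.
pose ks := map (fun p : option I * option I => f' p.1 * f' p.2)
  (enum {: option I * option I}).
exists [set a | forall z, Y z -> alpha (z, act a z)].
  exists [set k | k \in ks]; split; first exact: compact_seq.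
  move=> t.
  have [v hv] := thickR [:: e; t^-1].
  have Sv : S v by rewrite -[v](gmul1l G); apply: hv; rewrite inE eqxx.
  have Ss : S (t^-1 * v) by apply: hv; rewrite !inE eqxx orbT.
  have [i hi] := hf _ Ss.
  have [r [hr hrv]] := IA _ eE3 v Sv.
  have [o ho] : exists o, forall w, Y w -> E3 (act r w, act (f' o) w).
    case: hr => [->|Sr].
      by exists None => w _; rewrite /= (act1 hflow); exact: entourage_refl.
    have [j hj] := hf _ Sr; exists (Some j) => w Yw; exact: (hj w Yw).2.
  exists (f' (Some i) * f' o).
    by apply/mapP; exists (Some i, o) => //; rewrite mem_enum.
  move=> z Yz.
  set w := act t z.
  have Yw : Y w by exact: Y_inv.
  have ez : z = act (t^-1 * v) (act v^-1 w).
    by rewrite /w -!(actM hflow) mulgK gmulVl (act1 hflow).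
  rewrite !(actM hflow) -/w {1}ez.
  apply: (tr _ (act (t^-1 * v) (act (f' o) w))).
  - apply: hd => //; [exact: Y_inv | exact: Y_inv |].
    exact: tr3 _ (act r w) _ (hrv w Yw) (ho w Yw).
  - exact: (hi _ (Y_inv _ _ Yw)).1.
by move=> a z Aa Yz; exact: Aa z Yz.
Qed.
Lemma final : [/\ compact Y, minimal_flow act Y & ap_flow G act Y].
Proof. split; [exact: Ycomp | exact: minY | exact: apY]. Qed.
End Main.

Theorem corollary2 (T : topologicalType) (G : topGroup T) (X : uniformType)
  (act : T -> X -> X) (S : set T) (x : X) :
  hausdorff_space T -> hausdorff_space X -> is_flow G act ->
  subsemigroup G S -> thick G S -> normal_sub G S ->
  compact (closure [set act s x | s in inv_set G S]) ->
  unif_lyapunov_stable act S x ->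
  [/\ compact (closure (torbit act x)),
      minimal_flow act (closure (torbit act x))
    & ap_flow G act (closure (torbit act x))].
Proof.
move=> _ _ hflow hsg hthick hnorm hC hstab.
by move: (@final T G X act S x hflow hsg hthick hnorm hC hstab).
Qed.
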